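(* Let $R$ be a ring, $\mathcal{X}$ a class of left $R$-modules and $\mathcal{Y}$ a class of right $R$-modules, and assume $\mathcal{GF}_{(\mathcal{X},\mathcal{Y})}(R)$ is closed under extensions. Then a left $R$-module $M$ has a $\mathcal{Y}\otimes_R-$ exact $\mathcal{X}$-coresolution if and only if it has a $\mathcal{Y}\otimes_R-$ exact $\mathcal{GF}_{(\mathcal{X},\mathcal{Y})}(R)$-coresolution.
   Context: An exact sequence $\mathbb{E}$ of left modules is $\mathcal{Y}\otimes_R-$ exact if $Y\otimes_R\mathbb{E}$ is exact for all $Y\in\mathcal{Y}$. For a class $\mathcal{A}$, an $\mathcal{A}$-coresolution of $M$ is an exact sequence $0\to M\to A^0\to A^1\to\cdots$ with all $A^i\in\mathcal{A}$. $M$ is Gorenstein $(\mathcal{X},\mathcal{Y})$-flat if there is a $\mathcal{Y}\otimes_R-$ exact exact sequence $\cdots\to X_1\to X_0\to X^0\to X^1\to\cdots$ in $\mathcal{X}$ with $M\cong\ker(X^0\to X^1)$; $\mathcal{GF}_{(\mathcal{X},\mathcal{Y})}(R)$ is the class of these. *)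

(* Defs.v *)
From HB Require Import structures.
From mathcomp Require Import all_boot all_order all_algebra.
Set Implicit Arguments. Unset Strict Implicit. Unset Printing Implicit Defensive.
Import Order.TTheory GRing.Theory Num.Theory.
Local Open Scope ring_scope.

(* Left R-modules: lmodType R.  Right R-modules: lmodType R^c, with the right
   action  y . r  :=  (r : R^c) *: y. *)

Section Tensor.
Variable R : pzRingType.

(* The tensor product Y (x)_R A is the free abelian group on Y x A modulo the
   subgroup generated by the bilinearity/balancing relations.  Elements of the
   free abelian group are represented by finite formal sums
   s : seq (int * Y * A) (coefficient, y, a), evaluated to their coefficient
   function [fsum s]. *)
Definition fsum (Y : lmodType R^c) (A : lmodType R) (s : seq (int * Y * A))
  : Y -> A -> int :=
  fun y a => \sum_(t <- s | (t.1.2 == y) && (t.2 == a)) t.1.1.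

Definition delta (Y : lmodType R^c) (A : lmodType R) (y0 : Y) (a0 : A)
  : Y -> A -> int :=
  fun y a => if (y == y0) && (a == a0) then 1 else 0.

Inductive relN (Y : lmodType R^c) (A : lmodType R) : (Y -> A -> int) -> Prop :=
| relN0 : relN (fun _ _ => 0)
| relNadd f g : relN f -> relN g -> relN (fun y a => f y a + g y a)
| relNopp f : relN f -> relN (fun y a => - f y a)
| relNext f g : relN f -> (forall y a, f y a = g y a) -> relN g
| relNaddl (y1 y2 : Y) (a : A) :
    relN (fun y b => delta (y1 + y2) a y b - delta y1 a y b - delta y2 a y b)
| relNaddr (y : Y) (a1 a2 : A) :
    relN (fun z b => delta y (a1 + a2) z b - delta y a1 z b - delta y a2 z b)
| relNbal (y : Y) (r : R) (a : A) :
    relN (fun z b => delta ((r : R^c) *: y) a z b - delta y (r *: a) z b).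

Definition tmap (Y : lmodType R^c) (A B : lmodType R) (f : A -> B)
  (s : seq (int * Y * A)) : seq (int * Y * B) :=
  map (fun t => (t.1.1, t.1.2, f t.2)) s.

Definition tzero (Y : lmodType R^c) (A : lmodType R) (s : seq (int * Y * A)) :=
  relN (fsum s).

Definition teq (Y : lmodType R^c) (A : lmodType R) (s t : seq (int * Y * A)) :=
  relN (fun y a => fsum s y a - fsum t y a).

Definition texact_at (Y : lmodType R^c) (A B C : lmodType R)
  (f : A -> B) (g : B -> C) : Prop :=
  forall s : seq (int * Y * B),
    tzero (tmap g s) <-> exists t : seq (int * Y * A), teq (tmap f t) s.

Definition tinj (Y : lmodType R^c) (A B : lmodType R) (f : A -> B) : Prop :=
  forall s : seq (int * Y * A), tzero (tmap f s) -> tzero s.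

Definition mexact (A B C : lmodType R) (f : A -> B) (g : B -> C) : Prop :=
  forall y : B, g y = 0 <-> exists x : A, f x = y.

Definition Ymexact (Ycl : lmodType R^c -> Prop) (A B C : lmodType R)
  (f : A -> B) (g : B -> C) : Prop :=
  forall Y : lmodType R^c, Ycl Y -> @texact_at Y _ _ _ f g.

Definition Yminj (Ycl : lmodType R^c -> Prop) (A B : lmodType R)
  (f : A -> B) : Prop :=
  forall Y : lmodType R^c, Ycl Y -> @tinj Y _ _ f.

Definition GFlat (Xcl : lmodType R -> Prop) (Ycl : lmodType R^c -> Prop)
  (M : lmodType R) : Prop :=
  exists (C : int -> lmodType R) (d : forall i : int, {linear C i -> C (i + 1)}),
    (forall i, Xcl (C i)) /\
    (forall i, mexact (d i) (d (i + 1))) /\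
    (forall i, Ymexact Ycl (d i) (d (i + 1))) /\
    exists phi : {linear M -> C 0},
      injective phi /\ (forall x : C 0, d 0 x = 0 <-> exists m, phi m = x).

Definition has_Y_exact_coresolution (Ycl : lmodType R^c -> Prop)
  (Acl : lmodType R -> Prop) (M : lmodType R) : Prop :=
  exists (A : nat -> lmodType R) (e : {linear M -> A 0%N})
         (d : forall n : nat, {linear A n -> A n.+1}),
    (forall n, Acl (A n)) /\
    injective e /\ mexact e (d 0%N) /\ (forall n, mexact (d n) (d n.+1)) /\
    Yminj Ycl e /\ Ymexact Ycl e (d 0%N) /\
    (forall n, Ymexact Ycl (d n) (d n.+1)).

Definition closed_under_extensions (P : lmodType R -> Prop) : Prop :=
  forall (A B C : lmodType R) (f : {linear A -> B}) (g : {linear B -> C}),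
    injective f -> (forall c : C, exists b, g b = c) -> mexact f g ->
    P A -> P C -> P B.

End Tensor.

(* Main.v *)
Require Import Defs.
From HB Require Import structures.
From mathcomp Require Import all_boot all_order all_algebra.
Import GRing.Theory.
Local Open Scope ring_scope.

From mathcomp Require Import ring.
From Stdlib Require Import ClassicalEpsilon FunctionalExtensionality PropExtensionality.
Set Implicit Arguments. Unset Strict Implicit. Unset Printing Implicit Defensive.

Section Quot.
Variables (R : pzRingType) (W V : lmodType R) (k : {linear W -> V}).

Definition qrel (x y : V) : Prop := exists w, k w = x - y.

Lemma qrel_refl x : qrel x x.
Proof. by exists 0; rewrite linear0 subrr. Qed.
Lemma qrel_sym x y : qrel x y -> qrel y x.
Proof. by case=> w hw; exists (- w); rewrite linearN hw opprB. Qed.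
Lemma qrel_trans x y z : qrel x y -> qrel y z -> qrel x z.
Proof. by case=> w hw [w' hw']; exists (w + w'); rewrite linearD hw hw' addrA subrK. Qed.
Lemma qrelD x y x' y' : qrel x x' -> qrel y y' -> qrel (x + y) (x' + y').
Proof.
case=> w hw [w' hw']; exists (w + w'); rewrite linearD hw hw'.
by rewrite opprD addrACA.
Qed.
Lemma qrelN x x' : qrel x x' -> qrel (- x) (- x').
Proof. by case=> w hw; exists (- w); rewrite linearN hw opprD. Qed.
Lemma qrelZ r x x' : qrel x x' -> qrel (r *: x) (r *: x').
Proof. by case=> w hw; exists (r *: w); rewrite linearZZ hw scalerBr. Qed.
Lemma qrel_ker w : qrel (k w) 0.
Proof. by exists w; rewrite subr0. Qed.

Definition canon (x : V) : V := epsilon (inhabits (0:V)) (fun y => qrel y x).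
Lemma canonP x : qrel (canon x) x.
Proof. by apply: (epsilon_spec (inhabits (0:V)) (fun y => qrel y x)); exists x; apply: qrel_refl. Qed.
Lemma canon_eq x y : qrel x y -> canon x = canon y.
Proof.
move=> h; rewrite /canon; congr epsilon; apply: functional_extensionality => z.
apply: propositional_extensionality; split => hz.
  exact: qrel_trans hz h.
exact: qrel_trans hz (qrel_sym h).
Qed.
Lemma canonK x : canon (canon x) = canon x.
Proof. exact: canon_eq (canonP x). Qed.

Definition Q := {x : V | canon x == x}.
HB.instance Definition _ := Choice.on Q.

Definition qpi (x : V) : Q := exist _ (canon x) (introT eqP (canonK x)).
Lemma qpiK (a : Q) : qpi (val a) = a.
Proof. by apply: val_inj => /=; apply/eqP; case: a. Qed.
Lemma qpi_eq x y : qpi x = qpi y <-> qrel x y.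
Proof.
split=> [h|h]; last by apply: val_inj => /=; apply: canon_eq.
have: canon x = canon y by move: (congr1 val h).
move=> e; apply: qrel_trans (qrel_sym (canonP x)) _; rewrite e; exact: canonP.
Qed.
Lemma qpi_val x : qrel (val (qpi x)) x.
Proof. exact: canonP. Qed.

Definition qadd (a b : Q) : Q := qpi (val a + val b).
Definition qopp (a : Q) : Q := qpi (- val a).
Definition qzero : Q := qpi 0.
Definition qscale (r : R) (a : Q) : Q := qpi (r *: val a).

Lemma qaddA : associative qadd.
Proof.
move=> a b c; apply/qpi_eq.
apply: qrel_trans (qrelD (qrel_refl _) (qpi_val _)) _.
apply: qrel_sym; apply: qrel_trans (qrelD (qpi_val _) (qrel_refl _)) _.
by rewrite addrA; apply: qrel_refl.
Qed.
Lemma qaddC : commutative qadd.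
Proof. by move=> a b; rewrite /qadd addrC. Qed.
Lemma qadd0 : left_id qzero qadd.
Proof.
move=> a; rewrite -[RHS]qpiK; apply/qpi_eq.
by rewrite -[X in qrel _ X]add0r; apply: qrelD (qpi_val _) (qrel_refl _).
Qed.
Lemma qaddN : left_inverse qzero qopp qadd.
Proof.
move=> a; apply/qpi_eq.
apply: qrel_trans (qrelD (qpi_val _) (qrel_refl _)) _.
by rewrite addNr; apply: qrel_refl.
Qed.
HB.instance Definition _ := GRing.isZmodule.Build Q qaddA qaddC qadd0 qaddN.

Lemma qscaleA a b v : qscale a (qscale b v) = qscale (a * b) v.
Proof.
apply/qpi_eq; apply: qrel_trans (qrelZ a (qpi_val _)) _.
by rewrite scalerA; apply: qrel_refl.
Qed.
Lemma qscale1 : left_id 1 qscale.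
Proof. by move=> a; rewrite /qscale scale1r qpiK. Qed.
Lemma qscaleDr : right_distributive qscale (@GRing.add Q).
Proof.
move=> r a b; apply/qpi_eq.
apply: qrel_trans (qrelZ r (qpi_val _)) _.
apply: qrel_sym; apply: qrel_trans (qrelD (qpi_val _) (qpi_val _)) _.
by rewrite scalerDr; apply: qrel_refl.
Qed.
Lemma qscaleDl v : {morph qscale^~ v : a b / a + b}.
Proof.
move=> a b; apply/qpi_eq; apply: qrel_sym.
apply: qrel_trans (qrelD (qpi_val _) (qpi_val _)) _.
by rewrite scalerDl; apply: qrel_refl.
Qed.
HB.instance Definition _ := GRing.Zmodule_isLmodule.Build R Q qscaleA qscale1 qscaleDr qscaleDl.

Lemma qpi_is_linear : linear qpi.
Proof.
move=> r x y; apply/qpi_eq; apply: qrel_sym.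
apply: qrel_trans (qrelD (qpi_val _) (qpi_val _)) _.
apply: qrelD (qrelZ r (qpi_val _)) (qrel_refl _).
Qed.
HB.instance Definition _ := GRing.isLinear.Build R V Q *:%R qpi qpi_is_linear.

Lemma qpi_surj (a : Q) : exists x, qpi x = a.
Proof. by exists (val a); apply: qpiK. Qed.
Lemma qpi0 x : qpi x = 0 <-> exists w, k w = x.
Proof.
split=> [/qpi_eq [w hw]|[w <-]]; first by exists w; rewrite hw subr0.
by apply/qpi_eq; apply: qrel_ker.
Qed.
Lemma qpik w : qpi (k w) = 0.
Proof. by apply/qpi0; exists w. Qed.

Variables (U : lmodType R) (f : {linear V -> U}).
Hypothesis fk : forall w, f (k w) = 0.
Lemma f_qrel x y : qrel x y -> f x = f y.
Proof. by case=> w hw; apply/eqP; rewrite -subr_eq0 -linearB -hw fk. Qed.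
Definition qlift (a : Q) : U := let _ := fk in f (val a).
Lemma qlift_pi x : qlift (qpi x) = f x.
Proof. exact: f_qrel (qpi_val x). Qed.
Lemma qlift_is_linear : linear qlift.
Proof.
move=> r a b.
have -> : r *: a + b = qpi (r *: val a + val b).
  by rewrite linearP /= !qpiK.
by rewrite qlift_pi linearP.
Qed.
HB.instance Definition _ := GRing.isLinear.Build R Q U *:%R qlift qlift_is_linear.
End Quot.


Section T.
Variables (R : pzRingType) (Y : lmodType R^c).
Implicit Types A B C : lmodType R.

Section Closed.
Variables (A : lmodType R) (P : (Y -> A -> int) -> Prop).
Hypotheses (P0 : P (fun _ _ => 0))
  (PD : forall f g, P f -> P g -> P (fun y a => f y a + g y a))
  (PN : forall f, P f -> P (fun y a => - f y a))
  (PE : forall f g, P f -> (forall y a, f y a = g y a) -> P g).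

Lemma P_scale_nat h (n : nat) : P h -> P (fun y a => h y a * n%:Z).
Proof.
move=> Ph; elim: n => [|n IH]; first by apply: PE P0 _ => y a; rewrite mulr0.
by apply: PE (PD IH Ph) _ => y a; rewrite intS mulrDr mulr1 addrC.
Qed.
Lemma P_scale h (c : int) : P h -> P (fun y a => h y a * c).
Proof.
move=> Ph; case: c => n; first exact: P_scale_nat.
apply: PE (PN (P_scale_nat n.+1 Ph)) _ => y a; by rewrite NegzE mulrN.
Qed.
Lemma P_sub f g : P f -> P g -> P (fun y a => f y a - g y a).
Proof. by move=> Pf Pg; apply: PD Pf (PN Pg). Qed.
End Closed.

Lemma relN_scale A (h : Y -> A -> int) c : relN h -> relN (fun y a => h y a * c).
Proof. by apply: P_scale; [exact: relN0|exact: relNadd|exact: relNopp|exact: relNext]. Qed.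
Lemma relN_sub A (f g : Y -> A -> int) : relN f -> relN g -> relN (fun y a => f y a - g y a).
Proof. by move=> hf hg; apply: relNadd hf (relNopp hg). Qed.

Lemma fsum_nil A y a : fsum ([::] : seq (int * Y * A)) y a = 0.
Proof. by rewrite /fsum big_nil. Qed.
Lemma fsum_cons A (t : int * Y * A) s y a :
  fsum (t :: s) y a = delta t.1.2 t.2 y a * t.1.1 + fsum s y a.
Proof.
rewrite /fsum big_cons /delta [y == _]eq_sym [a == _]eq_sym.
by case: ifP => _; rewrite ?mul1r ?mul0r ?add0r.
Qed.
Lemma fsum_cat A (s1 s2 : seq (int * Y * A)) y a :
  fsum (s1 ++ s2) y a = fsum s1 y a + fsum s2 y a.
Proof. by rewrite /fsum big_cat. Qed.

Definition negl A (s : seq (int * Y * A)) := map (fun t => (- t.1.1, t.1.2, t.2)) s.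
Lemma fsum_negl A (s : seq (int * Y * A)) y a : fsum (negl s) y a = - fsum s y a.
Proof.
elim: s => [|t s IH] /=; first by rewrite !fsum_nil oppr0.
by rewrite !fsum_cons IH /= opprD mulrN.
Qed.

Inductive RelL A : seq (int * Y * A) -> Prop :=
| RL0 : RelL [::]
| RLcat w1 w2 : RelL w1 -> RelL w2 -> RelL (w1 ++ w2)
| RLneg w : RelL w -> RelL (negl w)
| RLaddl (y1 y2 : Y) (a : A) : RelL [:: (1, y1 + y2, a); (-1, y1, a); (-1, y2, a)]
| RLaddr (y : Y) (a1 a2 : A) : RelL [:: (1, y, a1 + a2); (-1, y, a1); (-1, y, a2)]
| RLbal (y : Y) (r : R) (a : A) : RelL [:: (1, (r : R^c) *: y, a); (-1, y, r *: a)].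

Lemma relN_RelL A (h : Y -> A -> int) :
  relN h -> exists w, RelL w /\ forall y a, h y a = fsum w y a.
Proof.
elim=> {h}.
- by exists [::]; split; [exact: RL0| move=> y a; rewrite fsum_nil].
- move=> f g _ [w1 [H1 E1]] _ [w2 [H2 E2]]; exists (w1 ++ w2); split; first exact: RLcat.
  by move=> y a; rewrite fsum_cat E1 E2.
- move=> f _ [w [H E]]; exists (negl w); split; first exact: RLneg.
  by move=> y a; rewrite fsum_negl E.
- move=> f g _ [w [H E]] fg; exists w; split => // y a; by rewrite -fg E.
- move=> y1 y2 a; eexists; split; first exact: (RLaddl y1 y2 a).
  move=> y b; rewrite !fsum_cons fsum_nil /=; ring.
- move=> y a1 a2; eexists; split; first exact: (RLaddr y a1 a2).
  move=> z b; rewrite !fsum_cons fsum_nil /=; ring.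
- move=> y r a; eexists; split; first exact: (RLbal y r a).
  move=> z b; rewrite !fsum_cons fsum_nil /=; ring.
Qed.

Lemma RelL_relN A (w : seq (int * Y * A)) : RelL w -> relN (fsum w).
Proof.
elim=> {w}.
- by apply: relNext (relN0 _ _) _ => y a; rewrite fsum_nil.
- move=> w1 w2 _ H1 _ H2; apply: relNext (relNadd H1 H2) _ => y a; by rewrite fsum_cat.
- move=> w _ H; apply: relNext (relNopp H) _ => y a; by rewrite fsum_negl.
- move=> y1 y2 a; apply: relNext (relNaddl y1 y2 a) _ => y b.
  rewrite !fsum_cons fsum_nil /=; ring.
- move=> y a1 a2; apply: relNext (relNaddr y a1 a2) _ => z b.
  rewrite !fsum_cons fsum_nil /=; ring.
- move=> y r a; apply: relNext (relNbal y r a) _ => z b.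
  rewrite !fsum_cons fsum_nil /=; ring.
Qed.

Section Map.
Variables (A B : lmodType R) (f : A -> B).
Hypotheses (fD : forall a b, f (a + b) = f a + f b) (fZ : forall r a, f (r *: a) = r *: f a).

Lemma tmap_cat (s1 s2 : seq (int * Y * A)) : tmap f (s1 ++ s2) = tmap f s1 ++ tmap f s2.
Proof. exact: map_cat. Qed.
Lemma tmap_negl (s : seq (int * Y * A)) : tmap f (negl s) = negl (tmap f s).
Proof. by rewrite /tmap /negl -!map_comp. Qed.

Lemma RelL_tmap w : RelL w -> RelL (tmap f w).
Proof.
elim=> {w}.
- exact: RL0.
- by move=> w1 w2 _ H1 _ H2; rewrite tmap_cat; apply: RLcat.
- by move=> w _ H; rewrite tmap_negl; apply: RLneg.
- move=> y1 y2 a; exact: RLaddl.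
- by move=> y a1 a2; rewrite /tmap /= fD; apply: RLaddr.
- by move=> y r a; rewrite /tmap /= fZ; apply: RLbal.
Qed.
End Map.

Lemma fsum_tmapU A B (f : A -> B) (U : seq A) (s : seq (int * Y * A)) y b :
  uniq U -> (forall t, t \in s -> t.2 \in U) ->
  fsum (tmap f s) y b = \sum_(a <- U | f a == b) fsum s y a.
Proof.
move=> uU; elim: s => [|t s IH] hs.
  by rewrite fsum_nil big1 // => a _; rewrite fsum_nil.
rewrite /tmap /= -/(tmap f s) fsum_cons /= IH; last by move=> t' ht'; apply: hs; rewrite inE ht' orbT.
under eq_bigr do rewrite fsum_cons.
rewrite big_split /=; congr (_ + _).
rewrite /delta; case: (y == t.1.2) => /=; last by rewrite mul0r big1 // => a _; rewrite mul0r.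
rewrite -big_distrl /=; congr (_ * _).
rewrite -big_mkcondr /=.
have tU : t.2 \in U by apply: hs; rewrite mem_head.
case: (f t.2 =P b) => [e|ne].
  rewrite (eq_bigl (fun a => a == t.2)); last first.
    by move=> a; case: (a =P t.2) => [->|]; rewrite ?andbF // e eqxx.
  rewrite big_const_seq.
  have -> : count (fun a => a == t.2) U = 1%N.
    by rewrite -[RHS]/(nat_of_bool true) -tU -count_uniq_mem.
  by rewrite e eqxx /= addr0.
rewrite big_pred0; first by rewrite eq_sym; case: (f t.2 =P b).
move=> a; case: (a =P t.2) => [->|]; rewrite ?andbF ?andbT //.
by case: (f t.2 =P b).
Qed.


Lemma fsum_tmap_eq A B (f : A -> B) (s1 s2 : seq (int * Y * A)) :
  (forall y a, fsum s1 y a = fsum s2 y a) ->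
  forall y b, fsum (tmap f s1) y b = fsum (tmap f s2) y b.
Proof.
move=> E y b; set U := undup (map (fun t => t.2) (s1 ++ s2)).
have uU : uniq U by apply: undup_uniq.
rewrite (@fsum_tmapU _ _ f U s1) // ?(@fsum_tmapU _ _ f U s2) //.
- by apply: eq_bigr => a _; apply: E.
- by move=> t ht; rewrite mem_undup map_f // mem_cat ht orbT.
- by move=> t ht; rewrite mem_undup map_f // mem_cat ht.
Qed.

Section Func.
Variables (A B : lmodType R) (f : A -> B).
Hypotheses (fD : forall a b, f (a + b) = f a + f b) (fZ : forall r a, f (r *: a) = r *: f a).

Lemma tzero_tmap (s : seq (int * Y * A)) : tzero s -> tzero (tmap f s).
Proof.
move=> /relN_RelL [w [Hw E]].
apply: relNext (RelL_relN (RelL_tmap fD fZ Hw)) _.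
by apply: fsum_tmap_eq => y a; rewrite E.
Qed.

Lemma teq_tmap (s t : seq (int * Y * A)) : teq s t -> teq (tmap f s) (tmap f t).
Proof.
move=> H.
have H1 : tzero (s ++ negl t).
  by apply: relNext H _ => y a; rewrite fsum_cat fsum_negl.
move: (tzero_tmap H1); rewrite /tzero tmap_cat tmap_negl => H2.
by apply: relNext H2 _ => y a; rewrite fsum_cat fsum_negl.
Qed.
End Func.

Lemma teq_refl A (s : seq (int * Y * A)) : teq s s.
Proof. by apply: relNext (relN0 _ _) _ => y a; rewrite subrr. Qed.
Lemma teq_sym A (s t : seq (int * Y * A)) : teq s t -> teq t s.
Proof. by move=> H; apply: relNext (relNopp H) _ => y a; rewrite opprB. Qed.
Lemma teq_trans A (s t u : seq (int * Y * A)) : teq s t -> teq t u -> teq s u.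
Proof. by move=> H1 H2; apply: relNext (relNadd H1 H2) _ => y a; rewrite addrA subrK. Qed.
Lemma tzero_teq A (s t : seq (int * Y * A)) : tzero s -> teq s t -> tzero t.
Proof. by move=> H1 H2; apply: relNext (relN_sub H1 H2) _ => y a; rewrite opprB addrC subrK. Qed.
Lemma teq_tzero A (s t : seq (int * Y * A)) : tzero s -> tzero t -> teq s t.
Proof. by move=> H1 H2; apply: relN_sub H1 H2. Qed.
Lemma tzero_nil A : tzero ([::] : seq (int * Y * A)).
Proof. by apply: relNext (relN0 _ _) _ => y a; rewrite fsum_nil. Qed.
Lemma tzero_cat A (s t : seq (int * Y * A)) : tzero s -> tzero t -> tzero (s ++ t).
Proof. by move=> H1 H2; apply: relNext (relNadd H1 H2) _ => y a; rewrite fsum_cat. Qed.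
Lemma teq_cat A (s1 s2 t1 t2 : seq (int * Y * A)) :
  teq s1 t1 -> teq s2 t2 -> teq (s1 ++ s2) (t1 ++ t2).
Proof.
move=> H1 H2; apply: relNext (relNadd H1 H2) _ => y a; rewrite !fsum_cat.
by rewrite opprD addrACA.
Qed.
Lemma tmap_comp A B C (f : A -> B) (g : B -> C) (s : seq (int * Y * A)) :
  tmap g (tmap f s) = tmap (g \o f) s.
Proof. by rewrite /tmap -map_comp. Qed.
Lemma tmap_eq A B (f g : A -> B) (s : seq (int * Y * A)) :
  f =1 g -> tmap f s = tmap g s.
Proof. by move=> fg; apply: eq_map => t; rewrite fg. Qed.
Lemma tmap_id A (s : seq (int * Y * A)) : tmap id s = s.
Proof. by rewrite /tmap; elim: s => [|[[c y] a] s IH] //=; rewrite IH. Qed.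

Lemma relN_delta0 A (y : Y) : relN (delta y (0 : A)).
Proof.
have H := relNaddr y (0 : A) 0.
apply: relNext (relNopp H) _ => z b; rewrite addr0; ring.
Qed.

Lemma tzero_tmap0 A B (f : A -> B) (s : seq (int * Y * A)) :
  (forall a, f a = 0) -> tzero (tmap f s).
Proof.
move=> f0; elim: s => [|t s IH]; first exact: tzero_nil.
have H := relNadd (relN_scale t.1.1 (relN_delta0 B t.1.2)) IH.
by apply: relNext H _ => y b; rewrite /tmap /= -/(tmap f s) fsum_cons /= f0.
Qed.

Lemma teq_tmapD A B (f g h : A -> B) (s : seq (int * Y * A)) :
  (forall a, h a = f a + g a) -> teq (tmap h s) (tmap f s ++ tmap g s).
Proof.
move=> hfg; elim: s => [|t s IH]; first exact: teq_refl.
have H := relNadd (relN_scale t.1.1 (relNaddr t.1.2 (f t.2) (g t.2))) IH.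
apply: relNext H _ => y b.
rewrite /tmap /= -!/(tmap _ s) !fsum_cons /= !fsum_cat !fsum_cons /= hfg.
ring.
Qed.

Lemma lift_list A B (p : A -> B) : (forall b, exists a, p a = b) ->
  forall s : seq (int * Y * B), exists t, tmap p t = s.
Proof.
move=> ps; elim=> [|[[c y] b] s [t Ht]]; first by exists [::].
have [a pa] := ps b; exists ((c, y, a) :: t); by rewrite /tmap /= -/(tmap p t) Ht pa.
Qed.

Section RE.
Variables (A B C : lmodType R) (f : A -> B) (q : B -> C).
Hypotheses (qD : forall a b, q (a + b) = q a + q b) (qZ : forall r a, q (r *: a) = r *: q a)
  (qsurj : forall c, exists b, q b = c)
  (qker : forall b b', q b = q b' -> exists a, f a = b - b').

Definition sec (c : C) : B := epsilon (inhabits (0 : B)) (fun b => q b = c).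
Lemma secP c : q (sec c) = c.
Proof. by apply: (epsilon_spec (inhabits (0 : B)) (fun b => q b = c)); apply: qsurj. Qed.

Definition Lf (h : Y -> C -> int) : Y -> B -> int :=
  fun y b => if sec (q b) == b then h y (q b) else 0.

Definition Kset (h : Y -> B -> int) :=
  exists t, relN (fun y b => fsum (tmap f t) y b - h y b).

Lemma Kset0 : Kset (fun _ _ => 0).
Proof. by exists [::]; apply: relNext (relN0 _ _) _ => y b; rewrite fsum_nil subr0. Qed.
Lemma KsetD h1 h2 : Kset h1 -> Kset h2 -> Kset (fun y b => h1 y b + h2 y b).
Proof.
move=> [t1 H1] [t2 H2]; exists (t1 ++ t2); apply: relNext (relNadd H1 H2) _ => y b.
by rewrite tmap_cat fsum_cat opprD addrACA.
Qed.
Lemma KsetN h : Kset h -> Kset (fun y b => - h y b).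
Proof.
move=> [t H]; exists (negl t); apply: relNext (relNopp H) _ => y b.
by rewrite tmap_negl fsum_negl opprB opprK addrC.
Qed.
Lemma KsetE h1 h2 : Kset h1 -> (forall y b, h1 y b = h2 y b) -> Kset h2.
Proof. by move=> [t H] E; exists t; apply: relNext H _ => y b; rewrite E. Qed.
Lemma Kset_rel h : relN h -> Kset h.
Proof. by move=> H; exists [::]; apply: relNext (relNopp H) _ => y b; rewrite fsum_nil sub0r. Qed.
Lemma Kset_scale h c : Kset h -> Kset (fun y b => h y b * c).
Proof. apply: P_scale; [exact: Kset0|exact: KsetD|exact: KsetN|exact: KsetE]. Qed.
Lemma Kset_ker (y : Y) (b b' : B) : q b = q b' -> Kset (fun z x => delta y b z x - delta y b' z x).
Proof.
move=> /qker [a fa]; exists [:: (1, y, a)].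
have H := relNaddr y b' (b - b').
apply: relNext (relNopp H) _ => z x.
rewrite fsum_cons fsum_nil /= fa [b' + _]addrC subrK; ring.
Qed.

Lemma L_delta (y : Y) (c : C) (z : Y) (b : B) :
  (if sec (q b) == b then delta y c z (q b) else 0) = delta y (sec c) z b.
Proof.
rewrite /delta; case: (z == y) => /=; last by case: ifP.
case: (b =P sec c) => [->|ne]; first by rewrite secP eqxx eqxx.
case: (sec (q b) =P b) => [e|] //; case: (q b =P c) => [e'|] //.
by case: ne; rewrite -e e'.
Qed.

Lemma Kset_L h : relN h -> Kset (Lf h).
Proof.
rewrite /Lf; elim=> {h}.
- by apply: KsetE Kset0 _ => y b; case: ifP.
- move=> h1 h2 _ H1 _ H2; apply: KsetE (KsetD H1 H2) _ => y b; by case: ifP; rewrite ?addr0.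
- move=> h _ H; apply: KsetE (KsetN H) _ => y b; by case: ifP; rewrite ?oppr0.
- move=> h1 h2 _ H E; apply: KsetE H _ => y b; by rewrite E.
- move=> y1 y2 c; apply: KsetE (Kset_rel (relNaddl y1 y2 (sec c))) _ => z b.
  rewrite -!L_delta; case: ifP => _; by rewrite ?subr0.
- move=> y c1 c2.
  have H1 := Kset_rel (relNaddr y (sec c1) (sec c2)).
  have H2 := @Kset_ker y (sec (c1 + c2)) (sec c1 + sec c2).
  rewrite qD !secP in H2; have {H2} H2 := H2 erefl.
  apply: KsetE (KsetD H1 H2) _ => z b.
  rewrite -!L_delta; case: ifP => _; rewrite ?subr0 //; ring.
- move=> y r c.
  have H1 := Kset_rel (relNbal y r (sec c)).
  have H2 := @Kset_ker y (r *: sec c) (sec (r *: c)).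
  rewrite qZ !secP in H2; have {H2} H2 := H2 erefl.
  apply: KsetE (KsetD H1 H2) _ => z b.
  rewrite -!L_delta; case: ifP => _; rewrite ?subr0 //; ring.
Qed.

Lemma Kset_diff (s : seq (int * Y * B)) :
  Kset (fun y b => fsum s y b - Lf (fsum (tmap q s)) y b).
Proof.
rewrite /Lf; elim: s => [|t s IH].
  by apply: KsetE Kset0 _ => y b; rewrite /tmap /= !fsum_nil; case: ifP; rewrite subr0.
have H := @Kset_ker t.1.2 t.2 (sec (q t.2)) (esym (secP _)).
have {}H := KsetD (Kset_scale t.1.1 H) IH.
apply: KsetE H _ => y b.
rewrite /tmap /= -/(tmap q s) !fsum_cons /=.
have E := L_delta t.1.2 (q t.2) y b.
move: E; case: ifP => _ E; rewrite -E; ring.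
Qed.

Lemma right_exact (s : seq (int * Y * B)) :
  tzero (tmap q s) -> exists t, teq (tmap f t) s.
Proof.
move=> /Kset_L H; have [t Ht] := KsetD (Kset_diff s) H.
by exists t; apply: relNext Ht _ => y b; rewrite subrK.
Qed.
End RE.
End T.


Section Maps.
Variables (R : pzRingType) (X G0 G1 : lmodType R) (phi : {linear G0 -> X}) (d0 : {linear G0 -> G1}).
Definition kap (g : G0) : X * G1 := (phi g, - d0 g).
Lemma kap_is_linear : linear kap.
Proof. by move=> r a b; rewrite /kap !linearP. Qed.
HB.instance Definition _ := GRing.isLinear.Build R G0 (X * G1)%type *:%R kap kap_is_linear.
Definition inlm (x : X) : X * G1 := (x, 0).
Lemma inlm_is_linear : linear inlm.
Proof. move=> r a b; apply: injective_projections => /=; by rewrite ?scaler0 ?addr0. Qed.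
HB.instance Definition _ := GRing.isLinear.Build R X (X * G1)%type *:%R inlm inlm_is_linear.
Definition inrm (g : G1) : X * G1 := (0, g).
Lemma inrm_is_linear : linear inrm.
Proof. move=> r a b; apply: injective_projections => /=; by rewrite ?scaler0 ?addr0. Qed.
HB.instance Definition _ := GRing.isLinear.Build R G1 (X * G1)%type *:%R inrm inrm_is_linear.
Definition fstm (p : X * G1) : X := p.1.
Lemma fstm_is_linear : linear fstm.
Proof. by []. Qed.
HB.instance Definition _ := GRing.isLinear.Build R (X * G1)%type X *:%R fstm fstm_is_linear.
Definition sndm (p : X * G1) : G1 := p.2.
Lemma sndm_is_linear : linear sndm.
Proof. by []. Qed.
HB.instance Definition _ := GRing.isLinear.Build R (X * G1)%type G1 *:%R sndm sndm_is_linear.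
End Maps.
Section Opp.
Variables (R : pzRingType) (G : lmodType R).
Definition oppm (g : G) : G := - g.
Lemma oppm_is_linear : linear oppm.
Proof. by move=> r a b; rewrite /oppm opprD scalerN. Qed.
HB.instance Definition _ := GRing.isLinear.Build R G G *:%R oppm oppm_is_linear.
End Opp.

Section GF.
Variables (R : pzRingType) (Xcl : lmodType R -> Prop) (Ycl : lmodType R^c -> Prop).

Lemma GF_Yinj (G : lmodType R) (C : int -> lmodType R)
  (dC : forall i, {linear C i -> C (i + 1)})
  (Cex : forall i, mexact (dC i) (dC (i + 1)))
  (CYex : forall i, Ymexact Ycl (dC i) (dC (i + 1)))
  (phi : {linear G -> C 0}) (phiinj : injective phi)
  (phiim : forall x : C 0, dC 0 x = 0 <-> exists m, phi m = x) : Yminj Ycl phi.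
Proof.
move=> Y HY s Hs.
have ex1 : forall c : C (-1), exists g, phi g == dC (-1) c.
  move=> c; have [g hg] : exists g, phi g = dC (-1) c.
    by apply/phiim; apply: ((Cex (-1)) (dC (-1) c)).2; exists c.
  by exists g; apply/eqP.
pose d' c := xchoose (ex1 c).
have d'P c : phi (d' c) = dC (-1) c by apply/eqP; apply: (xchooseP (ex1 c)).
have d'D a b : d' (a + b) = d' a + d' b by apply: phiinj; rewrite linearD !d'P linearD.
have d'Z r a : d' (r *: a) = r *: d' a by apply: phiinj; rewrite linearZ !d'P linearZ.
have d'surj g : exists c, d' c = g.
  have : dC 0 (phi g) = 0 by apply/phiim; exists g.
  move=> /(Cex (-1) (phi g)).1 [c hc]; exists c; apply: phiinj; by rewrite d'P.
have [t Ht] := lift_list d'surj s.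
have H1 : tzero (tmap (dC (-1)) t).
  by rewrite -(tmap_eq _ d'P) -tmap_comp Ht.
have [u Hu] := ((CYex (-2)) Y HY t).1 H1.
have H2 := teq_tmap d'D d'Z Hu; rewrite Ht tmap_comp in H2.
apply: tzero_teq H2; apply: tzero_tmap0 => x /=.
apply: phiinj; rewrite d'P linear0; apply: ((Cex (-2)) _).2; by exists x.
Qed.

Lemma GF_quot (G : lmodType R) (C : int -> lmodType R)
  (dC : forall i, {linear C i -> C (i + 1)})
  (HX : forall i, Xcl (C i))
  (Cex : forall i, mexact (dC i) (dC (i + 1)))
  (CYex : forall i, Ymexact Ycl (dC i) (dC (i + 1)))
  (phi : {linear G -> C 0}) (phiinj : injective phi)
  (phiim : forall x : C 0, dC 0 x = 0 <-> exists m, phi m = x) : GFlat Xcl Ycl (Q phi).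
Proof.
have fk : forall g, dC 0 (phi g) = 0 by move=> g; apply/phiim; exists g.
exists (fun i => C (i + 1)), (fun i => dC (i + 1)).
split; first by move=> i; apply: HX.
split; first by move=> i; apply: Cex.
split; first by move=> i; apply: CYex.
exists (qlift fk : {linear Q phi -> C (0 + 1)}); split.
- move=> a b E; apply/eqP; rewrite -subr_eq0; apply/eqP.
  have : qlift fk (a - b) = 0 by rewrite linearB E subrr.
  rewrite -(qpiK (a - b)) qlift_pi => /phiim [m hm].
  by rewrite -hm qpik.
- move=> x; split.
    by move=> /(Cex 0 x).1 [y hy]; exists (qpi phi y); rewrite /= qlift_pi.
  move=> [m <-] /=; rewrite -(qpiK m) qlift_pi; apply: (Cex 0 _).2; by exists (val m).
Qed.

Lemma lin_inj (A B : lmodType R) (f : {linear A -> B}) :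
  (forall a, f a = 0 -> a = 0) -> injective f.
Proof.
move=> H a b E; apply/eqP; rewrite -subr_eq0; apply/eqP; apply: H.
by rewrite linearB E subrr.
Qed.

Lemma lD (A B : lmodType R) (f : {linear A -> B}) a b : f (a + b) = f a + f b.
Proof. exact: linearD. Qed.
Lemma lZ (A B : lmodType R) (f : {linear A -> B}) r a : f (r *: a) = r *: f a.
Proof. exact: linearZZ. Qed.

Definition Ysurj (B C : lmodType R) (p : B -> C) :=
  forall Y : lmodType R^c, Ycl Y -> forall s : seq (int * Y * C), exists t, teq (tmap p t) s.

Hypothesis Hext : closed_under_extensions (GFlat Xcl Ycl).

Lemma step (L : lmodType R) : has_Y_exact_coresolution Ycl (GFlat Xcl Ycl) L ->
  exists (X : lmodType R) (i : {linear L -> X}) (L' : lmodType R) (q : {linear X -> L'}),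
   [/\ Xcl X, injective i, mexact i q, Yminj Ycl i & Ymexact Ycl i q] /\
   [/\ Ysurj q, (forall x, exists y, q y = x) & has_Y_exact_coresolution Ycl (GFlat Xcl Ycl) L'].
Proof.
case=> G [e [d [HG [einj [ex0 [exn [Ye [Yex0 Yexn]]]]]]]].
have [C [dC [HX [Cex [CYex [phi [phiinj phiim]]]]]]] := HG 0%N.
pose i : {linear L -> C 0} := phi \o e.
have iE l : i l = phi (e l) by [].
have d0e l : d 0%N (e l) = 0 by apply: (ex0 _).2; exists l.
have d1d0 g : d 1%N (d 0%N g) = 0 by apply: (exn 0%N _).2; exists g.
have d2d1 g : d 2%N (d 1%N g) = 0 by apply: (exn 1%N _).2; exists g.
have dCphi g : dC 0 (phi g) = 0 by apply/phiim; exists g.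
pose k : {linear G 0%N -> (C 0 * G 1%N)%type} := kap phi (d 0%N).
have kE g : k g = (phi g, - d 0%N g) by [].
have piP_swap g : qpi k (phi g, 0) = qpi k (0, d 0%N g).
  apply/qpi_eq; exists g; rewrite kE; apply: injective_projections => /=; by rewrite ?subr0 ?sub0r.
have piPD x g : qpi k (x, g) = qpi k (x, 0) + qpi k (0, g).
  have -> : (x, g) = ((x, 0) + (0, g) : (C 0 * G 1%N)%type).
    by apply: injective_projections => /=; rewrite ?addr0 ?add0r.
  by rewrite linearD.
have fkj : forall l, (qpi k \o @inlm _ (C 0) (G 1%N)) (i l) = 0.
  move=> l /=; have -> : @inlm _ (C 0) (G 1%N) (i l) = k (e l) by rewrite kE d0e oppr0.
  exact: qpik.
pose j : {linear Q i -> Q k} := qlift fkj.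
have jE x : j (qpi i x) = qpi k (x, 0) by exact: (qlift_pi fkj x).
have fkr : forall g, (d 1%N \o @sndm _ (C 0) (G 1%N)) (k g) = 0.
  by move=> g /=; rewrite /sndm /= linearN d1d0 oppr0.
pose rho : {linear Q k -> G 2} := qlift fkr.
have rhoE p : rho (qpi k p) = d 1%N p.2 by exact: (qlift_pi fkr p).
have fkt : forall g, (qpi phi \o @fstm _ (C 0) (G 1%N)) (k g) = 0.
  by move=> g /=; rewrite /fstm /=; exact: qpik.
pose tau : {linear Q k -> Q phi} := qlift fkt.
have tauE p : tau (qpi k p) = qpi phi p.1 by exact: (qlift_pi fkt p).
pose io : {linear G 1%N -> Q k} := qpi k \o @inrm _ (C 0) (G 1%N).
have ioE g : io g = qpi k (0, g) by [].
have jinj : injective j.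
  apply: lin_inj => a; rewrite -(qpiK a) jE => /qpi0 [g]; rewrite kE => hg.
  have h1 : phi g = (val a) by move: (congr1 fst hg).
  have h2 : d 0%N g = 0.
    by move: (congr1 snd hg) => /= /eqP; rewrite oppr_eq0 => /eqP.
  have [l hl] := (ex0 g).1 h2.
  apply/qpi0; exists l; by rewrite iE hl h1.
have exjr : mexact j rho.
  move=> p; rewrite -(qpiK p); split.
    rewrite rhoE => /(exn 0%N _).1 [g0 hg0]; exists (qpi i ((val p).1 + phi g0)); rewrite jE.
    apply/qpi_eq; exists g0; rewrite kE hg0.
    apply: injective_projections => /=; first by rewrite addrAC subrr add0r.
    by rewrite sub0r.
  move=> [a <-]; by rewrite -(qpiK a) jE rhoE /= linear0.
have exr2 : mexact rho (d 2%N).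
  move=> y; split.
    by move=> /(exn 1%N _).1 [g hg]; exists (qpi k (0, g)); rewrite rhoE.
  by move=> [p <-]; rewrite -(qpiK p) rhoE d2d1.
have GFP : GFlat Xcl Ycl (Q k).
  apply: (@Hext _ _ _ io tau).
  - apply: lin_inj => g; rewrite ioE => /qpi0 [g0]; rewrite kE => hg.
    have h1 : phi g0 = 0 by move: (congr1 fst hg).
    have h0 : g0 = 0 by apply: phiinj; rewrite h1 linear0.
    by move: (congr1 snd hg) => /= <-; rewrite h0 linear0 oppr0.
  - move=> h; exists (qpi k (val h, 0)); by rewrite tauE qpiK.
  - move=> p; rewrite -(qpiK p); split.
      rewrite tauE => /qpi0 [g0 hg0]; exists ((val p).2 + d 0%N g0); rewrite ioE.
      apply/esym/qpi_eq; exists g0; rewrite kE.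
      apply: injective_projections => /=; first by rewrite hg0 subr0.
      by rewrite opprD addrA subrr sub0r.
    move=> [g hg]; by rewrite -hg ioE tauE /= linear0.
  - exact: HG.
  - exact: (GF_quot HX Cex CYex phiinj phiim).
have Yphi : Yminj Ycl phi := GF_Yinj Cex CYex phiinj phiim.
have Yj : Yminj Ycl j.
  move=> Y HY s Hs.
  have [s1 Hs1] := lift_list (@qpi_surj _ _ _ i) s.
  have H1 : tzero (tmap (qpi k) (tmap (@inlm _ (C 0) (G 1%N)) s1)).
    have -> : tmap (qpi k) (tmap (@inlm _ (C 0) (G 1%N)) s1) = tmap j s.
      rewrite -Hs1 !tmap_comp; apply: tmap_eq => x; exact: (esym (jE x)).
    exact: Hs.
  have [u Hu] := right_exact (f := k) (q := qpi k) (lD _) (lZ _)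
     (@qpi_surj _ _ _ k) (fun b b' h => (qpi_eq _ _ _).1 h) H1.
  have Hu2 := teq_tmap (f := @sndm _ (C 0) (G 1%N)) (lD _) (lZ _) Hu.
  have H2 : tzero (tmap (d 0%N) (tmap (@oppm _ (G 0%N)) u)).
    have -> : tmap (d 0%N) (tmap (@oppm _ (G 0%N)) u) = tmap (@sndm _ (C 0) (G 1%N)) (tmap k u).
      rewrite !tmap_comp; apply: tmap_eq => x; exact: linearN.
    apply: tzero_teq (teq_sym Hu2).
    by rewrite tmap_comp; apply: tzero_tmap0.
  have [v Hv] := ((Yex0 Y HY) _).1 H2.
  have Hv2 := teq_tmap (f := phi \o @oppm _ (G 0%N)) (lD _) (lZ _) Hv.
  have Hu3 := teq_tmap (f := @fstm _ (C 0) (G 1%N)) (lD _) (lZ _) Hu.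
  have E1 : tmap (phi \o @oppm _ (G 0%N)) (tmap (@oppm _ (G 0%N)) u) = tmap (@fstm _ (C 0) (G 1%N)) (tmap k u).
    rewrite !tmap_comp; apply: tmap_eq => x; exact: (congr1 phi (opprK x)).
  have E2 : tmap (@fstm _ (C 0) (G 1%N)) (tmap (@inlm _ (C 0) (G 1%N)) s1) = s1.
    by rewrite tmap_comp -[RHS]tmap_id; apply: tmap_eq.
  rewrite E1 in Hv2.
  have Hv3 := teq_trans Hv2 Hu3. rewrite E2 in Hv3.
  have Hv4 := teq_tmap (f := qpi i) (lD _) (lZ _) Hv3.
  rewrite Hs1 in Hv4; apply: tzero_teq Hv4.
  rewrite !tmap_comp; apply: tzero_tmap0 => l.
  apply: (etrans _ (qpik i (- l))).
  change (qpi i (phi (oppm (e l))) = qpi i (i (- l))).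
  by rewrite iE /oppm (linearN e).
have Yjr : Ymexact Ycl j rho.
  move=> Y HY s; split.
    move=> Hs.
    have [s' Hs'] := lift_list (@qpi_surj _ _ _ k) s.
    have H1 : tzero (tmap (d 1%N) (tmap (@sndm _ (C 0) (G 1%N)) s')).
      have -> : tmap (d 1%N) (tmap (@sndm _ (C 0) (G 1%N)) s') = tmap rho s.
        rewrite -Hs' !tmap_comp; apply: tmap_eq => x; exact: (esym (rhoE x)).
      exact: Hs.
    have [u Hu] := ((Yexn 0%N Y HY) _).1 H1.
    set s1 := tmap (@fstm _ (C 0) (G 1%N)) s'.
    exists (tmap (qpi i) (s1 ++ tmap phi u)).
    have piPD' : forall x, qpi k x = (qpi k \o @inlm _ (C 0) (G 1%N) \o @fstm _ (C 0) (G 1%N)) x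
       + (qpi k \o @inrm _ (C 0) (G 1%N) \o @sndm _ (C 0) (G 1%N)) x.
      by case=> a b; exact: piPD.
    have A1 := teq_tmapD s' (f := qpi k \o @inlm _ (C 0) (G 1%N) \o @fstm _ (C 0) (G 1%N))
       (g := qpi k \o @inrm _ (C 0) (G 1%N) \o @sndm _ (C 0) (G 1%N)) (h := qpi k)
       piPD'.
    rewrite Hs' in A1; apply: teq_trans (teq_sym A1).
    rewrite tmap_comp tmap_cat; apply: teq_cat.
      rewrite /s1 !tmap_comp; rewrite (tmap_eq _ (fun x => jE (fstm x))); exact: teq_refl.
    have A2 := teq_tmap (f := qpi k \o @inrm _ (C 0) (G 1%N)) (lD _) (lZ _) Hu.
    rewrite !tmap_comp in A2; apply: teq_trans _ A2.
    rewrite tmap_comp; rewrite (tmap_eq _ (f := j \o qpi i \o phi) (g := qpi k \o @inrm _ (C 0) (G 1%N) \o d 0%N)); first exact: teq_refl.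
    move=> g; exact: (etrans (jE (phi g)) (piP_swap g)).
  move=> [t Ht].
  have := teq_tmap (f := rho) (lD _) (lZ _) Ht.
  rewrite tmap_comp => H; apply: tzero_teq H; apply: tzero_tmap0 => a.
  change (rho (j a) = 0); by rewrite -(qpiK a) jE rhoE /= linear0.
have Yr2 : Ymexact Ycl rho (d 2%N).
  move=> Y HY s; split.
    move=> /((Yexn 1%N Y HY) _).1 [t Ht].
    exists (tmap (qpi k \o @inrm _ (C 0) (G 1%N)) t).
    rewrite tmap_comp (tmap_eq _ (f := rho \o (qpi k \o @inrm _ (C 0) (G 1%N))) (g := d 1%N)) //.
    move=> g; exact: (rhoE (0, g)).
  move=> [t Ht].
  have := teq_tmap (f := d 2%N) (lD _) (lZ _) Ht.
  rewrite tmap_comp => H; apply: tzero_teq H; apply: tzero_tmap0 => a.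
  change (d 2%N (rho a) = 0); by rewrite -(qpiK a) rhoE d2d1.
exists (C 0), i, (Q i), (qpi i); split; first split.
- exact: HX.
- move=> a b E; apply: einj; apply: phiinj; exact: E.
- move=> x; exact: qpi0.
- move=> Y HY s Hs; apply: (Ye Y HY); apply: (Yphi Y HY); rewrite tmap_comp; exact: Hs.
- move=> Y HY s; split.
    move=> H; exact: (right_exact (f := i) (q := qpi i) (lD _) (lZ _)
     (@qpi_surj _ _ _ i) (fun b b' h => (qpi_eq _ _ _).1 h) H).
  move=> [t Ht]; have := teq_tmap (f := qpi i) (lD _) (lZ _) Ht.
  rewrite tmap_comp => H; apply: tzero_teq H; apply: tzero_tmap0 => l; exact: qpik.
split.
- move=> Y HY s; have [t Ht] := lift_list (@qpi_surj _ _ _ i) s; exists t; rewrite Ht; exact: teq_refl.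
- exact: qpi_surj.
pose G' (n : nat) : lmodType R := match n with 0 => Q k | n'.+1 => G n'.+2 end.
pose d' (n : nat) : {linear G' n -> G' n.+1} :=
  match n as n0 return {linear G' n0 -> G' n0.+1} with 0 => rho | n'.+1 => d n'.+2 end.
exists G', j, d'.
split; first by case=> [|n] //=; apply: HG.
split; first exact: jinj.
split; first exact: exjr.
split; first by case=> [|n] //=; apply: exn.
split; first exact: Yj.
split; first exact: Yjr.
by case=> [|n] //=; apply: Yexn.
Qed.


End GF.


Section Main.
Variables (R : pzRingType) (Xcl : lmodType R -> Prop) (Ycl : lmodType R^c -> Prop).

Lemma odd_absz_S (i : int) : odd (absz (i + 1)) = ~~ odd (absz i).
Proof.
case: i => n; first by rewrite addrC -intS.
by case: n => [|n] //=; rewrite subSS subn0 !negbK.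
Qed.

Lemma X_GF (Xm : lmodType R) : Xcl Xm -> GFlat Xcl Ycl Xm.
Proof.
move=> HX.
pose idL : {linear Xm -> Xm} := idfun.
pose zL : {linear Xm -> Xm} := \0.
pose d (i : int) : {linear Xm -> Xm} := if odd (absz i) then idL else zL.
have dS i : d (i + 1) = if odd (absz i) then zL else idL.
  by rewrite /d odd_absz_S; case: (odd _).
exists (fun _ => Xm), d.
split; first by [].
split.
  move=> i y; rewrite dS /d; case: (odd _) => /=; split.
  - by move=> _; exists y.
  - by [].
  - by move=> ->; exists 0.
  - by case=> x <-.
split.
  move=> i Y HY s; rewrite dS /d; case: (odd _) => /=; split.
  - by move=> _; exists s; rewrite (tmap_id s); apply: teq_refl.
  - by move=> _; apply: tzero_tmap0.
  - move=> Hs; exists [::]; apply: teq_tzero; first exact: tzero_nil.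
    by rewrite -(tmap_id s).
  - case=> t Ht; rewrite (tmap_id s); apply: tzero_teq Ht; exact: tzero_tmap0.
exists idL; split; first by [].
move=> x; rewrite /d /=; split; first by move=> _; exists x.
by [].
Qed.

Lemma mexact_splice0 (L0 X0 L1 X1 : lmodType R) (i0 : L0 -> X0) (q0 : X0 -> L1)
  (i1 : {linear L1 -> X1}) :
  mexact i0 q0 -> injective i1 -> mexact i0 (i1 \o q0).
Proof.
move=> H inj y; rewrite -(H y) /=; split; last by move=> ->; rewrite linear0.
by move=> h; apply: inj; rewrite h linear0.
Qed.

Lemma mexact_splice (X0 L1 X1 L2 X2 : lmodType R) (q0 : X0 -> L1)
  (i1 : L1 -> X1) (q1 : X1 -> L2) (i2 : {linear L2 -> X2}) :
  (forall l, exists x, q0 x = l) -> mexact i1 q1 -> injective i2 ->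
  mexact (i1 \o q0) (i2 \o q1).
Proof.
move=> sq H inj y /=; split.
  move=> h; have : q1 y = 0 by apply: inj; rewrite h linear0.
  move=> /(H y).1 [l hl]; have [x hx] := sq l; exists x; by rewrite /= hx.
move=> [x <-] /=; have -> : q1 (i1 (q0 x)) = 0 by apply/(H _).2; exists (q0 x).
by rewrite linear0.
Qed.

Lemma Ymexact_splice0 (L0 X0 L1 X1 : lmodType R) (i0 : L0 -> X0) (q0 : {linear X0 -> L1})
  (i1 : {linear L1 -> X1}) :
  Ymexact Ycl i0 q0 -> Yminj Ycl i1 -> Ymexact Ycl i0 (i1 \o q0).
Proof.
move=> H inj Y HY s; rewrite -(H Y HY s) -tmap_comp; split; first exact: inj.
exact: (tzero_tmap (f := i1) (lD i1) (lZ i1)).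
Qed.

Lemma Ymexact_splice (X0 L1 X1 L2 X2 : lmodType R) (q0 : X0 -> L1)
  (i1 : {linear L1 -> X1}) (q1 : {linear X1 -> L2}) (i2 : {linear L2 -> X2}) :
  Ysurj Ycl q0 -> Ymexact Ycl i1 q1 -> Yminj Ycl i2 ->
  Ymexact Ycl (i1 \o q0) (i2 \o q1).
Proof.
move=> sq H inj Y HY s; rewrite -tmap_comp; split.
  move=> /(inj Y HY) /(H Y HY s).1 [t Ht].
  have [t' Ht'] := sq Y HY t; exists t'; rewrite -tmap_comp.
  exact: teq_trans (teq_tmap (f := i1) (lD i1) (lZ i1) Ht') Ht.
move=> [t Ht]; apply: (tzero_tmap (f := i2) (lD i2) (lZ i2)); apply/(H Y HY s).2.
by exists (tmap q0 t); rewrite tmap_comp.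
Qed.

Record Out (L : lmodType R) := MkOut {
  oX : lmodType R; oi : {linear L -> oX}; oL : lmodType R; oq : {linear oX -> oL};
  oP1 : [/\ Xcl oX, injective oi, mexact oi oq, Yminj Ycl oi & Ymexact Ycl oi oq];
  oP2 : Ysurj Ycl oq;
  oP3 : forall x, exists y, oq y = x;
  oH : has_Y_exact_coresolution Ycl (GFlat Xcl Ycl) oL }.

Hypothesis Hext : closed_under_extensions (GFlat Xcl Ycl).

Lemma step_ex (L : lmodType R) (H : has_Y_exact_coresolution Ycl (GFlat Xcl Ycl) L) :
  exists o : Out L, True.
Proof.
have [X [i [L' [q [P1 [P2 P3 P4]]]]]] := step Hext H.
by exists (MkOut P1 P2 P3 P4).
Qed.

Definition stepT (L : lmodType R) (H : has_Y_exact_coresolution Ycl (GFlat Xcl Ycl) L) : Out L :=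
  proj1_sig (constructive_indefinite_description _ (step_ex H)).

Variables (M : lmodType R) (HM : has_Y_exact_coresolution Ycl (GFlat Xcl Ycl) M).

Fixpoint Ls (n : nat) : {L : lmodType R & has_Y_exact_coresolution Ycl (GFlat Xcl Ycl) L} :=
  match n with
  | 0 => existT _ M HM
  | n'.+1 => let o := stepT (projT2 (Ls n')) in existT _ (oL o) (oH o)
  end.

Definition outs (n : nat) : Out (projT1 (Ls n)) := stepT (projT2 (Ls n)).
Definition AA (n : nat) : lmodType R := oX (outs n).
Definition ee : {linear M -> AA 0} := oi (outs 0).
Definition dd (n : nat) : {linear AA n -> AA n.+1} :=
  (oi (outs n.+1) : {linear oL (outs n) -> AA n.+1}) \o oq (outs n).

Lemma backward : has_Y_exact_coresolution Ycl Xcl M.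
Proof.
exists AA, ee, dd.
have P1 n := oP1 (outs n).
split; first by move=> n; case: (P1 n).
split; first by case: (P1 0%N).
split.
  have [_ _ h _ _] := P1 0%N; have [_ h' _ _ _] := P1 1%N.
  exact: (mexact_splice0 h h').
split.
  move=> n; have [_ _ h _ _] := P1 n.+1; have [_ h' _ _ _] := P1 n.+2.
  exact: (mexact_splice (@oP3 _ (outs n)) h h').
split; first by case: (P1 0%N).
split.
  have [_ _ _ _ h] := P1 0%N; have [_ _ _ h' _] := P1 1%N.
  exact: (Ymexact_splice0 h h').
move=> n; have [_ _ _ _ h] := P1 n.+1; have [_ _ _ h' _] := P1 n.+2.
exact: (Ymexact_splice (@oP2 _ (outs n)) h h').
Qed.
End Main.

Unset Implicit Arguments.
Theorem lemma2p2 (R : pzRingType) (Xcl : lmodType R -> Prop)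
  (Ycl : lmodType R^c -> Prop) :
  closed_under_extensions (GFlat Xcl Ycl) ->
  forall M : lmodType R,
    has_Y_exact_coresolution Ycl Xcl M <->
    has_Y_exact_coresolution Ycl (GFlat Xcl Ycl) M.
Proof.
move=> Hext M; split.
  case=> A [e [d [HA rest]]]; exists A, e, d; split; last exact: rest.
  by move=> n; apply: X_GF.
move=> HM; exact: (backward Hext HM).
Qed.
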